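(* Under the Depth-First Leader-Follower (DFLF) strategy in an environment $R$ with a single door $s$ (as defined in the context), the following holds for every pixel $q\in R$ and every time $t$. If $q$ is unoccupied at both time $t$ and time $t+1$, then $q$ was never occupied at any time before $t$.
   Context: Pixels are the unit squares of the integer grid, identified with their lower-left corners $(i,j)\in\mathbb{Z}^2$. Two pixels are neighbors if they share an edge, so $(i,j)$ has the four neighbors $(i\pm1,j)$ and $(i,j\pm1)$. The environment $R$ is a finite set of pixels that is connected under this neighbor relation. It contains a single distinguished door pixel $s\in R$. Time is discrete, $t=0,1,2,\dots$. At each time, every pixel of $R$ holds at most one robot. $p(r,t)$ denotes the pixel occupied by robot $r$ at time $t$, and $\mathrm{prev}(r,t)=p(r,t-1)$. In one time step a robot either stays where it is or moves to a neighboring pixel of $R$ that is unoccupied. Vacating rule: if a robot occupies pixel $q$ at time $t$ and a different pixel at time $t+1$, then no robot occupies $q$ at time $t+1$; so the earliest a vacated pixel can be re-entered is time $t+2$. At time $0$ exactly one robot is present, on $s$. Door rule: whenever the robot on $s$ leaves, a new robot appears on $s$ as soon as the vacating rule allows. A pixel of $R$ is a frontier pixel at time $t$ if no robot has occupied it at any time $\le t$. The DFLF strategy works as follows. - Each robot is either moving or stopped. A moving robot is either the leader or a follower. - The first robot is the leader. Each newly appearing robot becomes the successor of the robot that most recently left the door, and that robot becomes its predecessor $\mathrm{pred}(r)$. These relations never change. - At each step, the leader behaves as follows. If the leader has a neighboring frontier pixel, it moves to one of them (chosen arbitrarily). Otherwise it becomes stopped permanently and leadership passes to its successor. If the leader has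 no frontier neighbor and is on the door $s$, the algorithm halts. - A follower $r$ moves at time $t$ to the pixel $\mathrm{prev}(\mathrm{pred}(r),t)$ previously occupied by its predecessor. - A stopped robot never moves again. Makespan: the first time $t^*$ at which every pixel of $R$ is occupied. *)

(* Defs.v *)
From Stdlib Require Import ZArith List Relations.
Import ListNotations.
Open Scope Z_scope.

(** Pixels are identified with their lower-left corners. *)
Definition pixel : Type := (Z * Z)%type.

Definition adj (x y : pixel) : Prop :=
  Z.abs (fst x - fst y) + Z.abs (snd x - snd y) = 1.

Definition connected_env (R : list pixel) : Prop :=
  forall x y, In x R -> In y R ->
    clos_refl_trans pixel (fun a b => In a R /\ In b R /\ adj a b) x y.

Definition environment (R : list pixel) (s : pixel) : Prop :=
  connected_env R /\ In s R.

(** A trajectory: [p r t] is the pixel occupied by robot [r] at time [t]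
    ([None] if robot [r] has not appeared yet).  Robots are numbered
    0,1,2,... in their order of appearance at the door; robot [r+1] is the
    successor of robot [r]. *)
Definition trajectory : Type := nat -> nat -> option pixel.

Definition occupied (p : trajectory) (t : nat) (q : pixel) : Prop :=
  exists r, p r t = Some q.

Definition frontier (R : list pixel) (p : trajectory) (t : nat) (q : pixel)
  : Prop :=
  In q R /\ forall t', (t' <= t)%nat -> ~ occupied p t' q.

Definition halt_cond (R : list pixel) (s : pixel) (p : trajectory)
  (lead : nat -> nat) (t0 : nat) : Prop :=
  p (lead t0) t0 = Some s /\ ~ (exists y, adj s y /\ frontier R p t0 y).

Definition halted (R : list pixel) (s : pixel) (p : trajectory)
  (lead : nat -> nat) (t : nat) : Prop :=
  exists t0, (t0 <= t)%nat /\ halt_cond R s p lead t0.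

Definition physical (R : list pixel) (p : trajectory) : Prop :=
  (forall r t x, p r t = Some x -> In x R) /\
  (forall r r' t x, p r t = Some x -> p r' t = Some x -> r = r') /\
  (forall r t x y, p r t = Some x -> p r (S t) = Some y -> y <> x ->
      adj x y /\ ~ occupied p t y) /\
  (forall r t x y, p r t = Some x -> p r (S t) = Some y -> y <> x ->
      ~ occupied p (S t) x).

(** Door rule (robots appear only at the door, robot [r+1] appearing as soon
    as the vacating rule allows after robot [r] leaves the door). *)
Definition door_rule (s : pixel) (p : trajectory) : Prop :=
  p 0%nat 0%nat = Some s /\
  (forall r, p (S r) 0%nat = None) /\
  (forall r t, p r t = Some s -> p r (S t) <> Some s ->
      p (S r) (S t) = None /\ p (S r) (S (S t)) = Some s) /\
  (forall r t, p r t = None -> p r (S t) <> None ->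
      exists r' t', r = S r' /\ t = S t' /\
        p r' t' = Some s /\ p r' (S t') <> Some s).

(** The DFLF strategy; [lead t] is the index of the leader at time [t].
    Robots with index < [lead t] are stopped, those with index > [lead t]
    are followers. *)
Definition dflf_rules (R : list pixel) (s : pixel) (p : trajectory)
  (lead : nat -> nat) : Prop :=
  lead 0%nat = 0%nat /\
  (forall t, halted R s p lead t ->
     lead (S t) = lead t /\ forall r, p r (S t) = p r t) /\
  (forall t x, ~ halted R s p lead t -> p (lead t) t = Some x ->
     (exists y, adj x y /\ frontier R p t y) ->
     lead (S t) = lead t /\
     exists y, adj x y /\ frontier R p t y /\ p (lead t) (S t) = Some y) /\
  (forall t x, ~ halted R s p lead t -> p (lead t) t = Some x ->
     ~ (exists y, adj x y /\ frontier R p t y) ->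
     lead (S t) = S (lead t) /\ p (lead t) (S t) = Some x) /\
  (forall t, ~ halted R s p lead t -> p (lead t) t = None ->
     lead (S t) = lead t) /\
  (forall t r, ~ halted R s p lead t -> (r < lead t)%nat ->
     p r (S t) = p r t) /\
  (forall t r, ~ halted R s p lead (S t) -> (lead (S t) < r)%nat ->
     p r (S t) <> None -> p r (S (S t)) = p (r - 1)%nat t).

Definition dflf_run (R : list pixel) (s : pixel) (p : trajectory)
  (lead : nat -> nat) : Prop :=
  physical R p /\ door_rule s p /\ dflf_rules R s p lead.

(* Main.v *)
Require Import Defs.
From Stdlib Require Import ZArith List Lia Classical.
Open Scope nat_scope.

Ltac unpack H :=
  destruct H as [[Hin [Huniq [Hmove Hvac]]] [[Hd0 [Hd1 [Hd3 Hd4]]]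
    [Hl0 [Hhalt [Hlmove [Hlstop [Hlabs [Hstop Hfol]]]]]]]].

Lemma appear R s p lead (H : dflf_run R s p lead) :
  forall a r, p (S r) a <> None ->
  exists t', (S (S t') <= a)%nat /\ p r t' = Some s.
Proof.
  unpack H. induction a as [|a IH]; intros r Hp.
  - exfalso; apply Hp, Hd1.
  - destruct (p (S r) a) eqn:E.
    + destruct (IH r) as [t' [H1 H2]]; [congruence|]. exists t'; split; [lia|auto].
    + destruct (Hd4 (S r) a E Hp) as [r'' [t'' [E1 [E2 [E3 _]]]]].
      injection E1 as ->. subst a. exists t''; split; [lia|auto].
Qed.

Lemma halted_S R s p lead t : halted R s p lead t -> halted R s p lead (S t).
Proof. intros [t0 [H1 H2]]; exists t0; split; [lia|auto]. Qed.

Lemma nv_strong R s p lead (H : dflf_run R s p lead) :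
  forall n t r, (t <= n)%nat -> p r t <> None -> p r (S t) <> None.
Proof.
  pose proof H as H0. unpack H.
  induction n as [n IHn] using (well_founded_induction lt_wf).
  intros t r Htn Hp.
  assert (Pers : forall b a r', (a <= b)%nat -> (b < t)%nat ->
            p r' a <> None -> p r' b <> None).
  { induction b as [|b IHb]; intros a r' Hab Hbt Ha.
    - replace a with 0%nat in Ha by lia; auto.
    - destruct (Nat.eq_dec a (S b)) as [->|Hne]; auto.
      apply (IHn b ltac:(lia) b r'); [lia|]. apply (IHb a); auto; lia. }
  destruct (p r t) as [x|] eqn:Ex; [|congruence].
  destruct (classic (halted R s p lead t)) as [Hh|Hh].
  - rewrite (proj2 (Hhalt t Hh) r). congruence.
  - destruct (lt_eq_lt_dec r (lead t)) as [[Hlt|Heq]|Hgt].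
    + rewrite (Hstop t r Hh Hlt). congruence.
    + subst r. destruct (classic (exists y, adj x y /\ frontier R p t y)) as [Hf|Hf].
      * destruct (Hlmove t x Hh Ex Hf) as [_ [y [_ [_ Hy]]]]. congruence.
      * destruct (Hlstop t x Hh Ex Hf) as [_ Hy]. congruence.
    + destruct t as [|t0].
      * destruct r as [|r']; [lia|]. rewrite Hd1 in Ex; congruence.
      * destruct r as [|r']; [lia|].
        rewrite (Hfol t0 (S r') Hh Hgt ltac:(congruence)).
        replace (S r' - 1)%nat with r' by lia.
        destruct (appear R s p lead H0 (S t0) r' ltac:(congruence)) as [t' [Ht' Hs]].
        apply (Pers t0 t'); [lia|lia|congruence].
Qed.

Lemma nv R s p lead (H : dflf_run R s p lead) :
  forall t r, p r t <> None -> p r (S t) <> None.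
Proof. intros t r; apply (nv_strong R s p lead H t t r); lia. Qed.

Lemma persist R s p lead (H : dflf_run R s p lead) :
  forall b a r, (a <= b)%nat -> p r a <> None -> p r b <> None.
Proof.
  induction b as [|b IHb]; intros a r Hab Ha.
  - replace a with 0%nat in Ha by lia; auto.
  - destruct (Nat.eq_dec a (S b)) as [->|Hne]; auto.
    apply (nv R s p lead H). apply (IHb a); auto; lia.
Qed.

Lemma op R s p lead (H : dflf_run R s p lead) :
  forall v r, p (S r) v <> None -> p r v <> None.
Proof.
  intros v r Hp. destruct (appear R s p lead H v r Hp) as [t' [Ht Hs]].
  apply (persist R s p lead H v t'); [lia|congruence].
Qed.

Lemma op_iter R s p lead (H : dflf_run R s p lead) :
  forall k a v, p (k + a) v <> None -> p a v <> None.
Proof.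
  induction k as [|k IH]; intros a v Hp; auto.
  apply IH. apply (op R s p lead H). exact Hp.
Qed.

Lemma s_not_frontier R s p lead (H : dflf_run R s p lead) :
  forall t, ~ frontier R p t s.
Proof.
  unpack H. intros t [_ Hf]. apply (Hf 0%nat ltac:(lia)). exists 0%nat; auto.
Qed.

Definition Inv (s : pixel) (p : trajectory) (v : nat) : Prop :=
  forall r, p r v = Some s -> p (S r) v = None.

Lemma no_enter R s p lead (H : dflf_run R s p lead) :
  forall v, (forall u, (u < v)%nat -> Inv s p u) ->
  forall r x, p r v = Some x -> x <> s -> p r (S v) <> Some s.
Proof.
  pose proof H as H0. unpack H. intros v IH r x Ex Hxs Hs.
  destruct (classic (halted R s p lead v)) as [Hh|Hh].
  - rewrite (proj2 (Hhalt v Hh) r) in Hs. congruence.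
  - destruct (lt_eq_lt_dec r (lead v)) as [[Hlt|Heq]|Hgt].
    + rewrite (Hstop v r Hh Hlt) in Hs. congruence.
    + subst r. destruct (classic (exists y, adj x y /\ frontier R p v y)) as [Hf|Hf].
      * destruct (Hlmove v x Hh Ex Hf) as [_ [y [_ [Hy Hy']]]].
        rewrite Hs in Hy'. injection Hy' as <-.
        apply (s_not_frontier R s p lead H0 v Hy).
      * destruct (Hlstop v x Hh Ex Hf) as [_ Hy]. congruence.
    + destruct v as [|v0].
      * destruct r as [|r']; [lia|]. rewrite Hd1 in Ex; congruence.
      * destruct r as [|r']; [lia|].
        rewrite (Hfol v0 (S r') Hh Hgt ltac:(congruence)) in Hs.
        replace (S r' - 1)%nat with r' in Hs by lia.
        destruct (p (S r') v0) eqn:E.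
        -- rewrite (IH v0 ltac:(lia) r' Hs) in E. congruence.
        -- destruct (Hd4 (S r') v0 E ltac:(congruence)) as [r'' [t'' [E1 [E2 [E3 E4]]]]].
           injection E1 as <-. subst v0.
           destruct (Hd3 r' t'' E3 E4) as [_ E5]. congruence.
Qed.

Lemma inv_all R s p lead (H : dflf_run R s p lead) : forall v, Inv s p v.
Proof.
  pose proof H as H0. unpack H.
  intro v. induction v as [v IH] using (well_founded_induction lt_wf).
  destruct v as [|v]; intros r Hr.
  - apply Hd1.
  - destruct (p (S r) (S v)) as [z|] eqn:Ez; auto. exfalso.
    destruct (p (S r) v) as [w|] eqn:Ew.
    + assert (Hv : p r v <> Some s).
      { intro Hs. rewrite (IH v ltac:(lia) r Hs) in Ew. congruence. }
      destruct (p r v) as [u|] eqn:Eu.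
      * apply (no_enter R s p lead H0 v (fun u0 Hu => IH u0 ltac:(lia)) r u Eu
                 ltac:(congruence) Hr).
      * apply (op R s p lead H0 v r); congruence.
    + destruct (Hd4 (S r) v Ew ltac:(congruence)) as [r'' [t'' [E1 [E2 [E3 E4]]]]].
      injection E1 as <-. subst v.
      destruct (Hd3 r t'' E3 E4) as [_ E5]. rewrite E5 in Ez. injection Ez as <-.
      pose proof (Huniq r (S r) _ _ Hr E5). lia.
Qed.

Lemma at_s_before R s p lead (H : dflf_run R s p lead) :
  forall t r, p r t <> None -> exists a, (a <= t)%nat /\ p r a = Some s.
Proof.
  unpack H. induction t as [|t IH]; intros r Hp.
  - destruct r as [|r]; [exists 0%nat; split; auto|]. exfalso; apply Hp, Hd1.
  - destruct (p r t) eqn:E.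
    + destruct (IH r) as [a [Ha Hs]]; [congruence|]. exists a; split; [lia|auto].
    + destruct (Hd4 r t E Hp) as [r' [t' [-> [-> [E3 E4]]]]].
      exists (S (S t')); split; [lia|]. apply (Hd3 r' t' E3 E4).
Qed.

Lemma left_door R s p lead (H : dflf_run R s p lead) :
  forall k a r, p r a = Some s -> forall x, p r (a + k) = Some x -> x <> s ->
    p (S r) (S (a + k)) <> None.
Proof.
  pose proof H as H0. unpack H.
  induction k as [|k IH]; intros a r Ha x Hx Hxs.
  - rewrite Nat.add_0_r in Hx. congruence.
  - destruct (p r (S a)) as [y|] eqn:E.
    + destruct (classic (y = s)) as [->|Hys].
      * replace (a + S k)%nat with (S a + k)%nat in * by lia.
        apply (IH (S a) r E x Hx Hxs).
      * destruct (Hd3 r a Ha ltac:(congruence)) as [_ E2].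
        apply (persist R s p lead H0 _ (S (S a))); [lia|congruence].
    + destruct (Hd3 r a Ha ltac:(congruence)) as [_ E2].
      apply (persist R s p lead H0 _ (S (S a))); [lia|congruence].
Qed.

Lemma mover_filled R s p lead (H : dflf_run R s p lead) :
  forall t r x, p r t = Some x -> p r (S t) <> Some x -> occupied p (S (S t)) x.
Proof.
  pose proof H as H0. unpack H. intros t r x Ex Hmv.
  assert (Hh : ~ halted R s p lead t).
  { intro Hh. apply Hmv. rewrite (proj2 (Hhalt t Hh) r). auto. }
  assert (Hge : (lead t <= r)%nat).
  { destruct (le_lt_dec (lead t) r) as [|Hlt]; auto.
    exfalso; apply Hmv. rewrite (Hstop t r Hh Hlt); auto. }
  assert (Hls : lead (S t) = lead t \/ lead (S t) = S (lead t)).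
  { destruct (p (lead t) t) as [y|] eqn:Ey.
    - destruct (classic (exists z, adj y z /\ frontier R p t z)) as [Hf|Hf].
      + left; apply (Hlmove t y Hh Ey Hf).
      + right; apply (Hlstop t y Hh Ey Hf).
    - left; apply (Hlabs t Hh Ey). }
  assert (Hh' : ~ halted R s p lead (S t)).
  { intros [t0 [Ht0 Hc]].
    destruct (Nat.eq_dec t0 (S t)) as [->|Hne].
    2:{ apply Hh. exists t0; split; [lia|auto]. }
    destruct Hc as [HL _].
    destruct (Nat.eq_dec r (lead t)) as [->|Hne].
    - destruct (classic (exists y, adj x y /\ frontier R p t y)) as [Hf|Hf].
      + destruct (Hlmove t x Hh Ex Hf) as [E1 [y [_ [Hy Hy']]]].
        rewrite E1 in HL. rewrite HL in Hy'. injection Hy' as <-.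
        apply (s_not_frontier R s p lead H0 t Hy).
      + destruct (Hlstop t x Hh Ex Hf) as [_ Hy]. congruence.
    - destruct (Nat.eq_dec (lead (S t)) r) as [Heq|Hne2].
      + rewrite Heq in HL.
        destruct (classic (x = s)) as [->|Hxs]; [congruence|].
        apply (no_enter R s p lead H0 t (fun u _ => inv_all R s p lead H0 u) r x Ex Hxs HL).
      + assert (HI := inv_all R s p lead H0 (S t) _ HL).
        apply (op_iter R s p lead H0 (r - S (lead (S t))) (S (lead (S t))) (S t)).
        * replace (r - S (lead (S t)) + S (lead (S t)))%nat with r by lia.
          apply (nv R s p lead H0 t r). congruence.
        * exact HI. }
  destruct (p (S r) (S t)) as [z|] eqn:Ez.
    assert (Hlt : lead (S t) < S r).
    { destruct (Nat.eq_dec r (lead t)) as [->|Hne]; [|destruct Hls as [E|E]; rewrite E; lia].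
      destruct (classic (exists y, adj x y /\ frontier R p t y)) as [Hf|Hf].
      + destruct (Hlmove t x Hh Ex Hf) as [E1 _]. rewrite E1; lia.
      + destruct (Hlstop t x Hh Ex Hf) as [_ Hy]. congruence. }
    exists (S r). rewrite (Hfol t (S r) Hh' Hlt ltac:(congruence)).
    replace (S r - 1)%nat with r by lia. exact Ex.
  - destruct (classic (x = s)) as [->|Hxs].
    + exists (S r). apply (Hd3 r t Ex Hmv).
    + exfalso.
      destruct (at_s_before R s p lead H0 t r ltac:(congruence)) as [a [Ha Hs]].
      apply (left_door R s p lead H0 (t - a) a r Hs x); auto.
      * replace (a + (t - a))%nat with t by lia. exact Ex.
      * replace (a + (t - a))%nat with t by lia. exact Ez.
Qed.

Lemma occ_pair R s p lead (H : dflf_run R s p lead) :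
  forall a q, occupied p a q -> forall b, (a <= b)%nat ->
    occupied p b q \/ occupied p (S b) q.
Proof.
  intros a q Ha b. induction b as [|b IH]; intros Hab.
  - left. replace a with 0%nat in Ha by lia. exact Ha.
  - destruct (Nat.eq_dec a (S b)) as [->|Hne]; [left; exact Ha|].
    destruct (IH ltac:(lia)) as [[r Hr]|Hr]; [|left; exact Hr].
    destruct (p r (S b)) as [y|] eqn:Ey.
    + destruct (classic (y = q)) as [->|Hyq].
      * left. exists r. exact Ey.
      * right. apply (mover_filled R s p lead H b r q Hr). congruence.
    + right. apply (mover_filled R s p lead H b r q Hr). congruence.
Qed.

Theorem mainTheorem2 :
  forall (R : list pixel) (s : pixel) (p : trajectory) (lead : nat -> nat),
    environment R s ->
    dflf_run R s p lead ->
    forall (q : pixel) (t : nat),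
      In q R ->
      ~ occupied p t q ->
      ~ occupied p (S t) q ->
      forall t', (t' < t)%nat -> ~ occupied p t' q.
Proof.
  intros R s p lead _ H q t _ H1 H2 t' Ht' Ho.
  destruct (occ_pair R s p lead H t' q Ho t ltac:(lia)); auto.
Qed.
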